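(* Consider the FlexPD-F iterates described in the context with $\alpha,\beta>0$ and integer $T\ge1$, and let $U=I-\alpha B$. If $U\succ 0$, i.e. $\alpha<1/\rho(B)$, then for every $p>1$ and every $k\ge0$, \[\|x^{k+1,T-1}-x^*\|_U^2+\frac{\alpha}{\beta}\|\lambda^k-\lambda^*\|^2\le \Gamma_F^{T-1}\Big(\|x^k-x^*\|_U^2+\frac{\alpha}{\beta}\|\lambda^k-\lambda^*\|^2\Big),\] where \[\Gamma_F=\max\Big\{1+\frac{p\alpha\beta\rho(AA')}{p-1},\; p\Big(\sqrt{\rho(U)}+\alpha L\sqrt{\rho(U^{-1})}\Big)^2\Big\}.\]
   Context: Setting: $n$ agents are connected by a connected undirected graph with edge set $\mathcal E$, $\epsilon=|\mathcal E|$. For $x\in\mathbb R^n$ let $f(x)=\sum_{i=1}^n f_i(x_i)$, where each $f_i:\mathbb R\to\mathbb R$ is twice differentiable with $m\le f_i''\le L$ for constants $0<m\le L$; $\nabla f(x)=(f_1'(x_1),\dots,f_n'(x_n))'$. $A\in\mathbb R^{\epsilon\times n}$ is the edge–node incidence matrix (null space spanned by the all-ones vector). $B\in\mathbb R^{n\times n}$ is symmetric positive semidefinite with the same null space as $A$, off-diagonal entries nonzero only on edges. $x^*$ is the unique minimizer of $f$ subject to $Ax=0$ and $\lambda^*$ a Lagrange multiplier with $\nabla f(x^* )+A'\lambda^*=0$, $Ax^*=0$, $Bx^*=0$, chosen in the column space of $A$. FlexPD-F: given $\alpha,\beta>0$, $T\ge1$, $x^0$ arbitrary, $\lambda^0=0$;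 for $k\ge0$: $x^{k+1,0}=x^k$, $x^{k+1,t}=(I-\alpha B)x^{k+1,t-1}-\alpha\nabla f(x^{k+1,t-1})-\alpha A'\lambda^k$ for $t=1,\dots,T$, $x^{k+1}=x^{k+1,T}$, $\lambda^{k+1}=\lambda^k+\beta Ax^{k+1}$. Notation: $\rho(S)$ is the largest eigenvalue of a symmetric matrix $S$ (if $B=0$, $1/\rho(B)=\infty$); $\|v\|_S^2=v'Sv$; $\|\cdot\|$ is the Euclidean norm. *)

(* Defs.v *)
From HB Require Import structures.
From mathcomp Require Import all_boot all_order all_algebra.
From mathcomp Require Import all_classical all_reals all_analysis.
Set Implicit Arguments. Unset Strict Implicit. Unset Printing Implicit Defensive.
Import Order.TTheory GRing.Theory Num.Theory.
Local Open Scope ring_scope.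

Section Defs.
Variable R : realType.

Definition qnorm (k : nat) (S : 'M[R]_k) (v : 'cV[R]_k) : R := (v^T *m S *m v) 0 0.

Definition sqnorm (k : nat) (v : 'cV[R]_k) : R := (v^T *m v) 0 0.

Definition posdef (k : nat) (S : 'M[R]_k) : Prop :=
  S^T = S /\ forall v : 'cV[R]_k, v != 0 -> 0 < qnorm S v.

Definition psd (k : nat) (S : 'M[R]_k) : Prop :=
  S^T = S /\ forall v : 'cV[R]_k, 0 <= qnorm S v.

Definition is_rho (k : nat) (S : 'M[R]_k) (r : R) : Prop :=
  eigenvalue S r /\ forall a, eigenvalue S a -> a <= r.

Definition adj (n eps : nat) (E : 'I_eps -> 'I_n * 'I_n) : rel 'I_n :=
  fun i j => [exists e, (E e == (i, j)) || (E e == (j, i))].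

Definition simple_connected_graph (n eps : nat) (E : 'I_eps -> 'I_n * 'I_n) : Prop :=
  (forall e, (E e).1 != (E e).2) /\
  (forall e e', E e = E e' \/ E e = ((E e').2, (E e').1) -> e = e') /\
  (forall i j : 'I_n, connect (adj E) i j).

(* edge-node incidence matrix (edge e oriented from (E e).1 to (E e).2) *)
Definition incidence (n eps : nat) (E : 'I_eps -> 'I_n * 'I_n) : 'M[R]_(eps, n) :=
  \matrix_(e < eps, i < n) (((i == (E e).1)%:R - (i == (E e).2)%:R) : R).

Definition fsum (n : nat) (fi : 'I_n -> R -> R) (x : 'cV[R]_n) : R :=
  \sum_(i < n) fi i (x i 0).

Definition grad (n : nat) (fi : 'I_n -> R -> R) (x : 'cV[R]_n) : 'cV[R]_n :=
  \col_i (derive1 (fi i) (x i 0)).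

Definition inner_step (n eps : nat) (A : 'M[R]_(eps, n)) (B : 'M[R]_n)
  (fi : 'I_n -> R -> R) (alpha : R) (lam : 'cV[R]_eps) (x : 'cV[R]_n) : 'cV[R]_n :=
  (1%:M - alpha *: B) *m x - alpha *: grad fi x - alpha *: (A^T *m lam).

(* x^{k+1,t} as a function of x^k and lambda^k *)
Definition inner_iter (n eps : nat) (A : 'M[R]_(eps, n)) (B : 'M[R]_n)
  (fi : 'I_n -> R -> R) (alpha : R) (lam : 'cV[R]_eps) (x : 'cV[R]_n) (t : nat)
  : 'cV[R]_n :=
  iter t (inner_step A B fi alpha lam) x.

(* (x^k, lambda^k) of FlexPD-F, lambda^0 = 0 *)
Fixpoint flexpd (n eps : nat) (A : 'M[R]_(eps, n)) (B : 'M[R]_n)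
  (fi : 'I_n -> R -> R) (alpha beta : R) (T : nat) (x0 : 'cV[R]_n) (k : nat)
  : 'cV[R]_n * 'cV[R]_eps :=
  match k with
  | 0 => (x0, 0)
  | k'.+1 =>
      let: (x, lam) := flexpd A B fi alpha beta T x0 k' in
      let x' := inner_iter A B fi alpha lam x T in
      (x', lam + beta *: (A *m x'))
  end.

End Defs.

(* Main.v *)
Require Import Defs.
From HB Require Import structures.
From mathcomp Require Import all_boot all_order all_algebra.
From mathcomp Require Import all_classical all_reals all_analysis.
From mathcomp Require Import complex ring lra.
Import Order.TTheory GRing.Theory Num.Theory.
Local Open Scope ring_scope.

Module SpecAux.

Section SpecC.
Variable C : numClosedFieldType.
Local Open Scope sesquilinear_scope.

Lemma specC_pow n (A : 'M[C]_n) k : A \is hermsymmx ->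
  A ^+ k = invmx (spectralmx A) *m diag_mx (\row_j (spectral_diag A 0 j ^+ k)) *m spectralmx A.
Proof.
move=> /hermitian_normalmx /orthomx_spectralP eA.
have Pu := spectral_unit A.
elim: k => [|k IH].
  rewrite expr0.
  have -> : diag_mx (\row_j (spectral_diag A 0 j ^+ 0)) = 1%:M.
    by apply/matrixP => i j; rewrite !mxE expr0.
  by rewrite mulmx1 mulVmx.
rewrite exprSr IH -mulmxE.
set P := spectralmx A in eA Pu IH *; set D := spectral_diag A in eA IH *.
rewrite {1}eA.
rewrite !mulmxA mulmxK // -[X in X *m P]mulmxA mulmx_diag.
congr (_ *m diag_mx _ *m _); apply/rowP => j; rewrite !mxE exprSr.
done.
Qed.

Lemma specC_form n (A : 'M[C]_n) k (u : 'rV[C]_n) : A \is hermsymmx ->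
  (u *m A ^+ k *m u ^t*) 0 0 =
  \sum_j spectral_diag A 0 j ^+ k * ((u *m (spectralmx A)^t*) 0 j * ((u *m (spectralmx A)^t*) 0 j)^*).
Proof.
move=> hA; rewrite specC_pow //.
have Pun := spectral_unitarymx A.
rewrite invmx_unitary //.
set P := spectralmx A; set w := u *m P^t*.
have ew : P *m u^t* = w^t* by rewrite /w trmx_mul map_mxM trmxCK.
rewrite !mulmxA -/w -mulmxA ew mxE; apply: eq_bigr => j _.
by rewrite mul_mx_diag !mxE; rewrite [_ * spectral_diag _ _ _ ^+ _]mulrC mulrA.
Qed.

End SpecC.

Section SpecC2.
Variable C : numClosedFieldType.
Local Open Scope sesquilinear_scope.

Lemma specC_eig n (A : 'M[C]_n) i : A \is hermsymmx ->
  eigenvalue A (spectral_diag A 0 i).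
Proof.
move=> /hermitian_normalmx /orthomx_spectralP eA.
have Pu := spectral_unit A.
have Pun := spectral_unitarymx A.
set P := spectralmx A in eA Pu Pun *; set D := spectral_diag A in eA *.
apply/eigenvalueP; exists (row i P).
  rewrite -row_mul {1}eA !mulmxA mulmxV // mul1mx.
  by rewrite row_mul row_diag_mx -scalemxAl -rowE.
apply/negP => /eqP r0.
move/unitarymxP: Pun => /matrixP /(_ i i).
rewrite !mxE eqxx /= big1 => [/esym/eqP|j _]; first by rewrite oner_eq0.
have := congr1 (fun M : 'rV[C]_n => M 0 j) r0; rewrite !mxE => ->.
by rewrite mul0r.
Qed.
End SpecC2.

Section SpecR.
Variable R : rcfType.
Local Open Scope sesquilinear_scope.

Lemma spec_real n (S : 'M[R]_n) : S^T = S ->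
  exists d : 'I_n -> R, (forall i, eigenvalue S (d i)) /\
    forall v : 'cV[R]_n, exists c : 'I_n -> R, (forall i, 0 <= c i) /\
      forall k, (v^T *m S ^+ k *m v) 0 0 = \sum_i c i * d i ^+ k.
Proof.
move=> Ssym.
pose f := real_complex R.
pose SC := map_mx f S.
have cf x : (f x)^* = f x.
  by apply: conj_Creal; rewrite /f complex_real.
have Sij i j : S i j = S j i by rewrite -{1}Ssym mxE.
have hS : SC \is hermsymmx.
  apply/is_hermitianmxP; rewrite expr0 scale1r; apply/matrixP => i j.
  by rewrite !mxE cf Sij.
have Dreal i : spectral_diag SC 0 i \is Num.real.
  by have /mxOverP := hermitian_spectral_diag_real hS; apply.
exists (fun i => complex.Re (spectral_diag SC 0 i)); split.
  move=> i; rewrite -(eigenvalue_map (real_complex R)).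
  have := @specC_eig _ _ SC i hS; rewrite -{1}(RRe_real (Dreal i)); exact.
move=> v.
pose u := map_mx f (v^T).
pose w := u *m (spectralmx SC)^t*.
have wge0 i : 0 <= w 0 i * (w 0 i)^* by exact: mul_conjC_ge0.
exists (fun i => complex.Re (w 0 i * (w 0 i)^*)); split.
  by move=> i; move: (wge0 i); rewrite lecE /= => /andP[].
move=> k; apply: (@complexI R); rewrite -/(f _) -/(f (\sum_i _)).
have mX : map_mx f (S ^+ k) = SC ^+ k.
  elim: k => [|k IH].
    rewrite !expr0; apply/matrixP => i j; rewrite !mxE; case: (i == j); by rewrite /= ?rmorph1 ?rmorph0.
  by rewrite !exprS -!mulmxE map_mxM IH.
have ut : u ^t* = map_mx f v.
  by apply/matrixP => i j; rewrite !mxE cf.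
have -> : f ((v^T *m S ^+ k *m v) 0 0) = (u *m SC ^+ k *m u ^t*) 0 0.
  by rewrite ut -mX /u /f -!map_mxM [in RHS]mxE.
rewrite specC_form // -/w.
rewrite /f rmorph_sum; apply: eq_bigr => i _.
rewrite rmorphM rmorphXn.
have E1 := RRe_real (Dreal i); have E2 := RRe_real (ger0_real (wge0 i)).
rewrite -[in LHS]E1 -[in LHS]E2 mulrC; reflexivity.
Qed.
End SpecR.
End SpecAux.

Module Aux.
Import SpecAux.
Set Implicit Arguments. Unset Strict Implicit. Unset Printing Implicit Defensive.
Local Open Scope ring_scope.

Definition bil (R : realType) n (Q : 'M[R]_n) (a b : 'cV[R]_n) : R := (a^T *m Q *m b) 0 0.

Lemma bil_sym (R : realType) n (Q : 'M[R]_n) a b : Q^T = Q -> bil Q a b = bil Q b a.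
Proof.
move=> hQ; rewrite /bil -[in LHS](trmxK (a^T *m Q *m b)) mxE.
by rewrite !trmx_mul trmxK hQ mulmxA.
Qed.

Lemma bilDl (R : realType) n (Q : 'M[R]_n) a b c : bil Q (a + b) c = bil Q a c + bil Q b c.
Proof. by rewrite /bil linearD /= !mulmxDl mxE. Qed.
Lemma bilDr (R : realType) n (Q : 'M[R]_n) a b c : bil Q c (a + b) = bil Q c a + bil Q c b.
Proof. by rewrite /bil !mulmxDr mxE. Qed.
Lemma bilZl (R : realType) n (Q : 'M[R]_n) x a c : bil Q (x *: a) c = x * bil Q a c.
Proof. by rewrite /bil linearZ /= -!scalemxAl mxE. Qed.
Lemma bilZr (R : realType) n (Q : 'M[R]_n) x a c : bil Q c (x *: a) = x * bil Q c a.
Proof. by rewrite /bil -!scalemxAr mxE. Qed.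

Lemma qn_lin (R : realType) n (Q : 'M[R]_n) (a b : 'cV_n) x y : Q^T = Q ->
  qnorm Q (x *: a + y *: b) = x^+2 * qnorm Q a + 2 * x * y * bil Q a b + y^+2 * qnorm Q b.
Proof.
move=> hQ; rewrite -[qnorm _ _]/(bil Q _ _) !(bilDl, bilDr, bilZl, bilZr).
rewrite (bil_sym b a hQ) /qnorm -/(bil Q a a) -/(bil Q b b).
ring.
Qed.

Lemma quad_split (R : realType) n (Q : 'M[R]_n) (a b : 'cV_n) s : Q^T = Q ->
  (forall z, 0 <= qnorm Q z) -> 0 < s ->
  qnorm Q (a + b) <= (1 + s) * qnorm Q a + (1 + s^-1) * qnorm Q b.
Proof.
move=> hQ pQ s0.
have e1 := qn_lin a b 1 1 hQ; rewrite !scale1r in e1.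
have h := pQ (s *: a + (-1) *: b); rewrite qn_lin // in h.
rewrite e1.
have : 2 * bil Q a b <= s * qnorm Q a + s^-1 * qnorm Q b.
  rewrite -(ler_pM2l s0) mulrDr [s * (s^-1 * _)]mulrA mulfV ?gt_eqF // mul1r.
  nra.
nra.
Qed.

Lemma quad_sum (R : realType) n (Q : 'M[R]_n) (a b : 'cV_n) x y q : Q^T = Q ->
  (forall z, 0 <= qnorm Q z) -> 0 < x -> 0 < y ->
  qnorm Q a <= x ^+ 2 * q -> qnorm Q b <= y ^+ 2 * q ->
  qnorm Q (a + b) <= (x + y) ^+ 2 * q.
Proof.
move=> hQ pQ x0 y0 ha hb.
have s0 : 0 < y / x by rewrite divr_gt0.
apply: (le_trans (quad_split a b hQ pQ s0)).
have -> : (x + y) ^+ 2 * q = (1 + y / x) * (x ^+ 2 * q) + (1 + (y / x)^-1) * (y ^+ 2 * q).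
  by field; rewrite ?gt_eqF.
apply: lerD; apply: ler_wpM2l => //.
  by rewrite addr_ge0 // ltW.
by rewrite addr_ge0 // ltW // invr_gt0.
Qed.

Lemma sqnorm_sum (R : realType) n (v : 'cV[R]_n) : sqnorm v = \sum_i v i 0 ^+ 2.
Proof. by rewrite /sqnorm mxE; apply: eq_bigr => i _; rewrite mxE expr2. Qed.

Lemma sqnorm_ge0 (R : realType) n (v : 'cV[R]_n) : 0 <= sqnorm v.
Proof. by rewrite sqnorm_sum sumr_ge0 // => i _; rewrite sqr_ge0. Qed.

Lemma sqnorm_gt0 (R : realType) n (v : 'cV[R]_n) : v != 0 -> 0 < sqnorm v.
Proof.
move=> v0; have [i vi] : exists i, v i 0 != 0.
  apply/existsP; apply: contraNT v0 => /existsPn h.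
  by apply/eqP/matrixP => i j; rewrite ord1 mxE; apply/eqP; move/negbNE: (h i).
rewrite sqnorm_sum (bigD1 i) //= ltr_pwDl ?sumr_ge0 // => [|j _].
  by rewrite lt_def sqr_ge0 sqrf_eq0 vi.
exact: sqr_ge0.
Qed.

Lemma qnorm_pow0 (R : realType) n (S : 'M[R]_n) v : (v^T *m S ^+ 0 *m v) 0 0 = sqnorm v.
Proof. by rewrite expr0 mulmx1. Qed.
Lemma qnorm_pow1 (R : realType) n (S : 'M[R]_n) v : (v^T *m S ^+ 1 *m v) 0 0 = qnorm S v.
Proof. by rewrite expr1. Qed.

Lemma rayleigh (R : realType) n (S : 'M[R]_n) r : S^T = S ->
  (forall a, eigenvalue S a -> a <= r) -> forall v, qnorm S v <= r * sqnorm v.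
Proof.
move=> hS hr v.
have [d [hd hc]] := @spec_real _ _ S hS.
have [c [c0 ec]] := hc v.
rewrite -qnorm_pow1 -(qnorm_pow0 S) !ec mulr_sumr; apply: ler_sum => i _.
rewrite expr0 expr1 mulr1 mulrC ler_wpM2r //.
exact: hr.
Qed.

Lemma eig_qn (R : realType) n (P : 'M[R]_n) a : eigenvalue P a ->
  exists2 w : 'cV_n, w != 0 & qnorm P w = a * sqnorm w.
Proof.
move=> /eigenvalueP [v vP v0]; exists v^T.
  by apply: contra v0 => /eqP h; rewrite -(trmxK v) h trmx0.
by rewrite /qnorm /sqnorm trmxK vP -scalemxAl mxE.
Qed.

Lemma posdef_eig (R : realType) n (P : 'M[R]_n) a : posdef P -> eigenvalue P a -> 0 < a.
Proof.
move=> [_ hP] /eig_qn [w w0 e].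
have := hP w w0; rewrite e => h.
by rewrite -(pmulr_lgt0 _ (sqnorm_gt0 w0)).
Qed.

Lemma posdef_unit (R : realType) n (P : 'M[R]_n) : posdef P -> P \in unitmx.
Proof.
move=> [hS hP]; rewrite -row_free_unit -kermx_eq0; apply/eqP/row_matrixP => i.
rewrite row0; apply/eqP; apply: contraT => ri.
have h0 : row i (kermx P) *m P = 0 by rewrite -row_mul mulmx_ker row0.
have w0 : (row i (kermx P))^T != 0.
  by apply: contra ri => /eqP h; rewrite -(trmxK (row i _)) h trmx0.
have := hP _ w0; rewrite /qnorm trmxK h0 mul0mx mxE ltxx.
by [].
Qed.

Lemma eig_inv (R : realType) n (P : 'M[R]_n) a : P \in unitmx -> eigenvalue P a ->
  a != 0 -> eigenvalue (invmx P) a^-1.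
Proof.
move=> Pu /eigenvalueP [v vP v0] a0; apply/eigenvalueP; exists v => //.
apply: (canLR (mulmxK Pu)).
by rewrite -scalemxAl vP scalerA mulVf // scale1r.
Qed.

Lemma eig_inv_nz (R : realType) n (P : 'M[R]_n) b : P \in unitmx ->
  eigenvalue (invmx P) b -> b != 0.
Proof.
move=> Pu /eigenvalueP [v vP v0]; apply: contra v0 => /eqP b0.
move: vP; rewrite b0 scale0r => h.
by rewrite -(mulmxKV Pu v) h mul0mx.
Qed.

Lemma qnZ (R : realType) n (Q : 'M[R]_n) x a : Q^T = Q -> qnorm Q (x *: a) = x ^+ 2 * qnorm Q a.
Proof.
move=> hQ; have := qn_lin a 0 x 0 hQ; rewrite scale0r addr0 => ->.
by rewrite /bil !mulmx0 !mxE expr0n /= !mul0r mulr0 !addr0.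
Qed.

Lemma qnZN (R : realType) n (Q : 'M[R]_n) x a : Q^T = Q -> qnorm Q ((- x) *: a) = x ^+ 2 * qnorm Q a.
Proof. by move=> hQ; rewrite qnZ // sqrrN. Qed.

Lemma qU_expand (R : realType) n (B : 'M[R]_n) alpha v :
  qnorm (1%:M - alpha *: B) v = sqnorm v - alpha * qnorm B v.
Proof.
by rewrite /qnorm /sqnorm mulmxBr mulmx1 mulmxBl -scalemxAr -scalemxAl !mxE.
Qed.

Lemma qU_le (R : realType) n (B : 'M[R]_n) alpha v : psd B -> 0 < alpha ->
  qnorm (1%:M - alpha *: B) v <= sqnorm v.
Proof.
move=> [_ hB] a0; rewrite qU_expand gerBl mulr_ge0 //; exact: ltW.
Qed.

Lemma posdef_ge0 (R : realType) n (P : 'M[R]_n) v : posdef P -> 0 <= qnorm P v.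
Proof.
move=> [_ hP]; have [->|v0] := eqVneq v 0.
  by rewrite /qnorm mulmx0 mxE.
exact/ltW/hP.
Qed.

Lemma eigU_le1 (R : realType) n (B : 'M[R]_n) alpha a : psd B -> 0 < alpha ->
  eigenvalue (1%:M - alpha *: B) a -> a <= 1.
Proof.
move=> hB a0 /eig_qn [w w0 e].
have := qU_le w hB a0; rewrite e -{2}(mul1r (sqnorm w)).
by rewrite ler_pM2r // sqnorm_gt0.
Qed.

Lemma eig_inv_pos (R : realType) n (P : 'M[R]_n) b : posdef P ->
  eigenvalue (invmx P) b -> 0 < b.
Proof.
move=> hP eb.
have Pu := posdef_unit hP.
have b0 := eig_inv_nz Pu eb.
have Pu' : invmx P \in unitmx by rewrite unitmx_inv.
have := eig_inv Pu' eb b0; rewrite invmxK => /(posdef_eig hP).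
by rewrite invr_gt0.
Qed.

Lemma S1 (R : realType) n (B : 'M[R]_n) alpha rhoU e :
  psd B -> 0 < alpha -> posdef (1%:M - alpha *: B) ->
  is_rho (1%:M - alpha *: B) rhoU ->
  qnorm (1%:M - alpha *: B) ((1%:M - alpha *: B) *m e) <= rhoU * qnorm (1%:M - alpha *: B) e.
Proof.
set U := 1%:M - alpha *: B => hB a0 hU [_ hr].
have hS := hU.1.
have [d [hd hc]] := @spec_real _ _ U hS.
have [c [c0 ec]] := hc e.
have -> : qnorm U (U *m e) = (e^T *m U ^+ 3 *m e) 0 0.
  by rewrite /qnorm trmx_mul hS !exprS expr0 -!mulmxE mulmx1 !mulmxA.
rewrite -qnorm_pow1 !ec mulr_sumr; apply: ler_sum => i _.
have d0 := posdef_eig hU (hd i).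
have d1 := eigU_le1 hB a0 (hd i).
have dr := hr _ (hd i).
have ci := c0 i.
rewrite expr1.
have h3 : d i ^+ 3 = d i * d i * d i by rewrite !exprS expr0 mulr1 mulrA.
rewrite h3.
have h1 : d i * d i <= rhoU by nra.
have h2 : d i * d i * d i <= rhoU * d i by nra.
nra.
Qed.

Lemma S2 (R : realType) n (B : 'M[R]_n) alpha rhoUinv e :
  posdef (1%:M - alpha *: B) ->
  is_rho (invmx (1%:M - alpha *: B)) rhoUinv ->
  sqnorm e <= rhoUinv * qnorm (1%:M - alpha *: B) e.
Proof.
set U := 1%:M - alpha *: B => hU [_ hr].
have hS := hU.1.
have Uu := posdef_unit hU.
have [d [hd hc]] := @spec_real _ _ U hS.
have [c [c0 ec]] := hc e.
rewrite -(qnorm_pow0 U) -qnorm_pow1 !ec mulr_sumr; apply: ler_sum => i _.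
have d0 := posdef_eig hU (hd i).
have dr := hr _ (eig_inv Uu (hd i) (lt0r_neq0 d0)).
have ci := c0 i.
have h : 1 <= rhoUinv * d i.
  by rewrite -(mulVf (lt0r_neq0 d0)) ler_pM2r.
rewrite expr0 expr1 mulr1 mulrCA -{1}(mulr1 (c i)) ler_wpM2l //.
Qed.

Lemma S3 (R : realType) n eps (A : 'M[R]_(eps, n)) rhoAA mu :
  is_rho (A *m A^T) rhoAA -> sqnorm (A^T *m mu) <= rhoAA * sqnorm mu.
Proof.
move=> [_ hr].
have -> : sqnorm (A^T *m mu) = qnorm (A *m A^T) mu.
  by rewrite /sqnorm /qnorm trmx_mul trmxK !mulmxA.
apply: rayleigh hr _.
by rewrite trmx_mul trmxK.
Qed.

Lemma lip_sq (R : realType) (h : R -> R) (L : R) :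
  (forall x, derivable h x 1) -> (forall x, 0 <= derive1 h x <= L) ->
  forall a b, (h a - h b) ^+ 2 <= L ^+ 2 * (a - b) ^+ 2.
Proof.
move=> dh bh.
suff key : forall a b, a < b -> (h b - h a) ^+ 2 <= L ^+ 2 * (b - a) ^+ 2.
  move=> a b; case: (ltgtP a b) => [ab|ba|->].
  - by rewrite -sqrrN opprB -(sqrrN (a - b)) opprB key.
  - exact: key.
  - by rewrite !subrr expr0n /= mulr0.
move=> a b ab.
have [c _ ec] := @MVT R h (derive1 h) a b ab
  (fun x _ => ltac:(rewrite derive1E; exact: derivableP))
  (derivable_within_continuous (fun x _ => dh x)).
rewrite ec exprMn ler_wpM2r ?sqr_ge0 //.
have /andP[c0 cL] := bh c.
by rewrite ler_sqr // ?nnegrE // (le_trans c0 cL).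
Qed.

Lemma grad_lip (R : realType) n (fi : 'I_n -> R -> R) L x y :
  (forall i x, derivable (derive1 (fi i)) x 1) ->
  (forall i x, 0 <= derive1 (derive1 (fi i)) x <= L) ->
  sqnorm (grad fi x - grad fi y) <= L ^+ 2 * sqnorm (x - y).
Proof.
move=> hd hb; rewrite !sqnorm_sum mulr_sumr; apply: ler_sum => i _.
rewrite !mxE; exact: lip_sq.
Qed.

Lemma step_decomp (R : realType) n (Ux Uxs gx gxs Al Als xs : 'cV[R]_n) alpha :
  Uxs = xs -> gxs = - Als ->
  Ux - alpha *: gx - alpha *: Al - xs =
  (Ux - Uxs + (- alpha) *: (gx - gxs)) + (- alpha) *: (Al - Als).
Proof.
move=> -> ->; apply/matrixP => i j; rewrite !mxE; ring.
Qed.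

Lemma one_step (R : realType) n eps (A : 'M[R]_(eps, n)) (B : 'M[R]_n)
  (fi : 'I_n -> R -> R) L alpha beta p rhoAA rhoU rhoUinv xstar lamstar lam x :
  psd B -> posdef (1%:M - alpha *: B) -> 0 < alpha -> 0 < beta -> 1 < p -> 0 < L ->
  (forall i x, derivable (derive1 (fi i)) x 1) ->
  (forall i x, 0 <= derive1 (derive1 (fi i)) x <= L) ->
  grad fi xstar + A^T *m lamstar = 0 -> B *m xstar = 0 ->
  is_rho (A *m A^T) rhoAA -> is_rho (1%:M - alpha *: B) rhoU ->
  is_rho (invmx (1%:M - alpha *: B)) rhoUinv ->
  qnorm (1%:M - alpha *: B) (inner_step A B fi alpha lam x - xstar) + alpha / beta * sqnorm (lam - lamstar)
  <= Num.max (1 + p * alpha * beta * rhoAA / (p - 1))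
                   (p * (Num.sqrt rhoU + alpha * L * Num.sqrt rhoUinv) ^+ 2) *
   (qnorm (1%:M - alpha *: B) (x - xstar) + alpha / beta * sqnorm (lam - lamstar)).
Proof.
move=> hB hU a0 b0 p1 L0 hd hb hg hBx hAA hrU hrUi.
set U := 1%:M - alpha *: B in hU hrU hrUi *.
set G := Num.max _ _.
set e := x - xstar; set mu := lam - lamstar; set q := qnorm U e; set r := sqnorm mu.
have hS : U^T = U := hU.1.
have pU : forall z, 0 <= qnorm U z := fun z => posdef_ge0 z hU.
have Uxs : U *m xstar = xstar.
  by rewrite /U mulmxBl mul1mx -scalemxAl hBx scaler0 subr0.
have gxs : grad fi xstar = - (A^T *m lamstar).
  by apply/eqP; rewrite -addr_eq0 hg.
have dec : inner_step A B fi alpha lam x - xstar =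
   (U *m e + (- alpha) *: (grad fi x - grad fi xstar)) + (- alpha) *: (A^T *m mu).
  rewrite /inner_step /e /mu mulmxBr mulmxBr; exact: step_decomp Uxs gxs.
rewrite dec.
have rU0 : 0 < rhoU := posdef_eig hU hrU.1.
have rUi0 : 0 < rhoUinv := eig_inv_pos hU hrUi.1.
set a1 := Num.sqrt rhoU; set a2 := alpha * L * Num.sqrt rhoUinv.
have a10 : 0 < a1 by rewrite sqrtr_gt0.
have a20 : 0 < a2 by rewrite !mulr_gt0 // sqrtr_gt0.
have hA : qnorm U (U *m e + (-alpha) *: (grad fi x - grad fi xstar)) <= (a1 + a2)^+2 * q.
  apply: (quad_sum hS pU a10 a20).
    by rewrite sqr_sqrtr ?(ltW rU0) //; exact: (S1 e hB a0 hU hrU).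
  rewrite qnZN //.
  apply: (le_trans (ler_wpM2l (sqr_ge0 _) (qU_le _ hB a0))).
  apply: (le_trans (ler_wpM2l (sqr_ge0 _) (grad_lip x xstar hd hb))).
  have := S2 e hU hrUi.
  rewrite /a2 !exprMn sqr_sqrtr ?(ltW rUi0) // => h.
  apply: (le_trans (ler_wpM2l (sqr_ge0 alpha) (ler_wpM2l (sqr_ge0 L) h))).
  by rewrite !mulrA.
have hBb : qnorm U ((-alpha) *: (A^T *m mu)) <= alpha^+2 * (rhoAA * r).
  rewrite qnZN //; apply: ler_wpM2l; first exact: sqr_ge0.
  exact: le_trans (qU_le _ hB a0) (S3 _ hAA).
have p0 : 0 < p - 1 by rewrite subr_gt0.
have hsplit := quad_split (U *m e + (-alpha) *: (grad fi x - grad fi xstar))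
   ((-alpha) *: (A^T *m mu)) hS pU p0.
have q0 : 0 <= q := pU e.
have r0 : 0 <= alpha / beta * r by rewrite mulr_ge0 ?sqnorm_ge0 // divr_ge0 // ltW.
have G1 : 1 + p * alpha * beta * rhoAA / (p - 1) <= G by rewrite le_max lexx.
have G2 : p * (a1 + a2) ^+ 2 <= G by rewrite le_max lexx orbT.
have eq1 : (1 + (p - 1)^-1) * (alpha ^+ 2 * (rhoAA * r)) + alpha / beta * r
   = (1 + p * alpha * beta * rhoAA / (p - 1)) * (alpha / beta * r).
  by field; rewrite ?gt_eqF.
rewrite [1 + (p - 1)]addrC subrK in hsplit.
apply: (le_trans (lerD hsplit (lexx _))).
apply: (@le_trans _ _ (p * ((a1 + a2) ^+ 2 * q) +
   ((1 + (p - 1)^-1) * (alpha ^+ 2 * (rhoAA * r)) + alpha / beta * r))).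
  rewrite -addrA; apply: lerD.
    by apply: ler_wpM2l; [exact: ltW (lt_trans ltr01 p1) | exact: hA].
  apply: lerD => //; apply: ler_wpM2l => //.
  by rewrite addr_ge0 // ltW // invr_gt0.
rewrite eq1 mulrDr; apply: lerD.
  by rewrite mulrA; apply: ler_wpM2r.
by apply: ler_wpM2r.
Qed.
End Aux.
Import Aux.

Theorem lemma3p3 (R : realType) (n eps : nat) (E : 'I_eps -> 'I_n * 'I_n)
  (B : 'M[R]_n) (fi : 'I_n -> R -> R) (m L : R)
  (xstar : 'cV[R]_n) (lamstar : 'cV[R]_eps)
  (alpha beta : R) (T : nat) (x0 : 'cV[R]_n) (p : R)
  (rhoAA rhoU rhoUinv : R) :
  simple_connected_graph E ->
  (* B: symmetric PSD, same null space as A, off-diagonal support on edges *)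
  psd B ->
  (forall v : 'cV[R]_n, B *m v = 0 <-> incidence R E *m v = 0) ->
  (forall i j : 'I_n, i != j -> B i j != 0 ->
     exists e, E e = (i, j) \/ E e = (j, i)) ->
  (* f_i twice differentiable with m <= f_i'' <= L *)
  0 < m -> m <= L ->
  (forall i x, derivable (fi i) x 1 /\ derivable (derive1 (fi i)) x 1) ->
  (forall i x, m <= derive1n 2 (fi i) x <= L) ->
  (* x* minimizer of f s.t. A x = 0; lambda* multiplier in the column space of A *)
  incidence R E *m xstar = 0 ->
  (forall x : 'cV[R]_n, incidence R E *m x = 0 -> fsum fi xstar <= fsum fi x) ->
  grad fi xstar + (incidence R E)^T *m lamstar = 0 ->
  B *m xstar = 0 ->
  (exists y : 'cV[R]_n, lamstar = incidence R E *m y) ->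
  (* parameters *)
  0 < alpha -> 0 < beta -> (1 <= T)%N ->
  posdef (1%:M - alpha *: B) ->
  1 < p ->
  is_rho (incidence R E *m (incidence R E)^T) rhoAA ->
  is_rho (1%:M - alpha *: B) rhoU ->
  is_rho (invmx (1%:M - alpha *: B)) rhoUinv ->
  forall k : nat,
    let U := 1%:M - alpha *: B in
    let xk := (flexpd (incidence R E) B fi alpha beta T x0 k).1 in
    let lamk := (flexpd (incidence R E) B fi alpha beta T x0 k).2 in
    let GammaF := Num.max (1 + p * alpha * beta * rhoAA / (p - 1))
                          (p * (Num.sqrt rhoU + alpha * L * Num.sqrt rhoUinv) ^+ 2) in
    qnorm U (inner_iter (incidence R E) B fi alpha lamk xk (T - 1) - xstar)
      + alpha / beta * sqnorm (lamk - lamstar)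
    <= GammaF ^+ (T - 1) * (qnorm U (xk - xstar) + alpha / beta * sqnorm (lamk - lamstar)).

Proof.
move=> hG hB hBA hBE m0 mL hdiff hbnd hAx hmin hg hBx hlam a0 b0 T1 hU p1 hAA hrU hrUi k.
cbv zeta.
move: (flexpd _ _ _ _ _ _ _ _).1 (flexpd _ _ _ _ _ _ _ _).2 => xk lamk.
have L0 : 0 < L := lt_le_trans m0 mL.
have hd : forall i x, derivable (derive1 (fi i)) x 1 by move=> i x; case: (hdiff i x).
have hb : forall i x, 0 <= derive1 (derive1 (fi i)) x <= L.
  move=> i x; have /andP[h1 h2] := hbnd i x.
  by rewrite h2 andbT (le_trans (ltW m0) h1).
set G := Num.max _ _.
have G0 : 0 <= G.
  by rewrite le_max; apply/orP; right; rewrite mulr_ge0 ?sqr_ge0 // ltW // (lt_trans ltr01 p1).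
elim: (T - 1)%N => [|t IH].
  by rewrite expr0 mul1r.
rewrite /inner_iter iterS -/(inner_iter _ _ _ _ _ _ t).
have h1 := Aux.one_step lamk (inner_iter (incidence R E) B fi alpha lamk xk t) hB hU a0 b0 p1 L0 hd hb hg hBx hAA hrU hrUi.
rewrite -/G in h1.
apply: (le_trans h1).
rewrite [G ^+ t.+1]exprS -[G * G ^+ t * _]mulrA.
exact: (ler_wpM2l G0 IH).
Qed.
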